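(* Let $r$ be an odd integer. Let $n>1$ be an odd integer with $n\equiv -r\pmod{4}$ and $n\geqslant \max\{r,4-r\}$. Then \[ \sum_{k=0}^{n-1}[8k+r]\frac{(q^r;q^4)_k^4}{(q^4;q^4)_k^4}q^{(4-2r)k} \equiv 0\pmod{\Phi_n(q)^2}. \]
   Context: $q$ is an indeterminate. The $q$-shifted factorial is $(a;q)_k=(1-a)(1-aq)\cdots(1-aq^{k-1})$ (with $(a;q)_0=1$), for any Laurent monomial $a$ in $q$. For any integer $m$ (including negative $m$), $[m]=(1-q^m)/(1-q)$. $\Phi_n(q)$ denotes the $n$-th cyclotomic polynomial. A congruence of rational functions modulo a polynomial $P(q)$, where the denominators are coprime to $P(q)$, means that $P(q)$ divides the numerator of the difference in lowest terms. *)

(* Defs.v *)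
From HB Require Import structures.
From mathcomp Require Import all_boot all_order all_algebra all_field.
Set Implicit Arguments. Unset Strict Implicit. Unset Printing Implicit Defensive.
Import Order.TTheory GRing.Theory Num.Theory.
Local Open Scope ring_scope.

Definition Qq : Type := {fraction {poly rat}}.

Definition qq : Qq := tofrac ('X : {poly rat}).

Definition qint (m : int) : Qq := (1 - qq ^ m) / (1 - qq).

Definition qpoch (a b : Qq) (k : nat) : Qq := \prod_(i < k) (1 - a * b ^+ i).

Definition PhiQ (n : nat) : {poly rat} := map_poly intr 'Phi_n.

(* f = g (mod P) for rational functions: f - g = P * A / B with B a nonzero
   polynomial coprime to P, i.e. P divides the numerator of f - g in lowest
   terms. *)
Definition congr_ratfun (f g : Qq) (P : {poly rat}) : Prop :=
  exists A B : {poly rat},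
    [/\ B != 0, coprimep B P & f - g = tofrac (P * A) / tofrac B].

(* Main.v *)
Require Import Defs.
From HB Require Import structures.
From mathcomp Require Import all_boot all_order all_algebra all_field.
From mathcomp Require Import ring zify.
Import Order.TTheory GRing.Theory Num.Theory.
Local Open Scope ring_scope.

Module Aux.
Set Implicit Arguments. Unset Strict Implicit. Unset Printing Implicit Defensive.

Section Poch.
Variable F : fieldType.
Definition poch (x p : F) k := \prod_(i < k) (1 - x * p ^+ i).

Lemma pochS x p k : poch x p k.+1 = poch x p k * (1 - x * p ^+ k).
Proof. by rewrite /poch big_ord_recr. Qed.

Lemma pochSl x p k : poch x p k.+1 = (1 - x) * poch (x * p) p k.
Proof.
rewrite /poch big_ord_recl expr0 mulr1; congr (_ * _).
by apply: eq_bigr => i _; rewrite /= exprS mulrA.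
Qed.

Lemma poch0 x p : poch x p 0 = 1.
Proof. by rewrite /poch big_ord0. Qed.

Lemma poch_neq0 x p k : (forall i, (i < k)%N -> 1 - x * p ^+ i != 0) ->
  poch x p k != 0.
Proof. by move=> h; rewrite /poch; apply/prodf_neq0 => i _; apply: h. Qed.

Lemma poch_eq0 x p k i : (i < k)%N -> x * p ^+ i = 1 -> poch x p k = 0.
Proof.
move=> ik e; rewrite /poch (bigD1 (Ordinal ik)) //= e subrr mul0r //.
Qed.
End Poch.

Section SixPhiFive.
Variables (F : fieldType) (p a b c : F) (L : nat).
Hypotheses (hp : p != 0) (ha : a != 0) (hb : b != 0) (hc : c != 0).
Hypothesis hP : forall j, (0 < j <= L)%N -> 1 - p ^+ j != 0.
Hypothesis hB : forall j, (j <= L)%N -> 1 - a * p / b * p ^+ j != 0.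
Hypothesis hC : forall j, (j <= L)%N -> 1 - a * p / c * p ^+ j != 0.
Hypothesis hA : forall j, (j <= L + L)%N -> 1 - a * p ^+ j != 0.

Definition t6 N k :=
  (1 - a * p ^+ (2 * k)) / (1 - a) *
  (poch a p k * poch b p k * poch c p k * poch (p^-1 ^+ N) p k)
  / (poch p p k * poch (a * p / b) p k * poch (a * p / c) p k
     * poch (a * p ^+ N.+1) p k)
  * (a * p ^+ N.+1 / (b * c)) ^+ k.

Definition R6 N :=
  poch (a * p) p N * poch (a * p / (b * c)) p N
  / (poch (a * p / b) p N * poch (a * p / c) p N).

Definition rho6 N := let Q := p ^+ N.+1 in
  (1 - a * Q) * (1 - a * Q / (b * c)) / ((1 - a * Q / b) * (1 - a * Q / c)).

Definition kap6 N := let Q := p ^+ N.+1 in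
  a * Q / (b * c * (1 - a * Q / b) * (1 - a * Q / c) * (1 - a) * (1 - Q^-1)).

Definition E6 N k := let Q := p ^+ N.+1 in
  poch a p k * poch b p k * poch c p k * poch Q^-1 p k
  / (poch p p k * poch (a * p / b) p k * poch (a * p / c) p k
     * poch (a * Q * p) p k).

Definition g6 N k := let Q := p ^+ N.+1 in let P := p ^+ k in
  kap6 N * E6 N k * ((1 - P) * (1 - a * P / b) * (1 - a * P / c) * (1 - a * Q * P))
  * (a * Q / (b * c)) ^+ k / (a * Q / (b * c)).

Lemma hA' j : (j <= L + L)%N -> a * p ^+ j != 1.
Proof. by move=> /hA; rewrite subr_eq0 eq_sym. Qed.


Lemma sub_div (x y : F) : y != 0 -> (y - x != 0) = (1 - x / y != 0).
Proof.
move=> hy; have -> : y - x = y * (1 - x / y) by field.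
by rewrite mulf_eq0 negb_or hy.
Qed.

Lemma subdiv_neq (x y z : F) : y != 0 -> 1 - z != 0 -> x / y = z -> y - x != 0.
Proof. by move=> hy hz e; rewrite sub_div // e. Qed.

Ltac nlia := repeat match goal with h : is_true (negb _) |- _ => clear h | h : _ = _ |- _ => clear h | h : forall _, _ |- _ => clear h end; lia.

Lemma step6 N k : (N.+1 < L)%N -> (k < L)%N ->
  t6 N.+1 k - rho6 N * t6 N k = g6 N k.+1 - g6 N k.
Proof.
move=> hN hk.
rewrite /t6 /g6 /rho6 /kap6 /E6.
set Q := p ^+ N.+1; set P := p ^+ k.
have eP2 : p ^+ (2 * k) = P ^+ 2 by rewrite mulnC exprM.
have eQ1 : p^-1 ^+ N.+1 = Q^-1 by rewrite exprVn.
have eQ2 : a * p ^+ N.+2 = a * Q * p by rewrite exprSr mulrA.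
have eQ3 : (a * Q * p / (b * c)) ^+ k = (a * Q / (b * c)) ^+ k * P.
  by rewrite /P -exprMn; congr (_ ^+ _); rewrite mulrAC.
have Q0 : Q != 0 by rewrite expf_neq0.
have Q1 : 1 - Q^-1 != 0.
  rewrite subr_eq0 eq_sym invr_eq1.
  have := @hP N.+1; rewrite subr_eq0 eq_sym; apply.
  nlia.
have aQ1 : 1 - a * Q != 0 by apply: hA; nlia.
have aQP1 : 1 - a * Q * P != 0.
  by rewrite -mulrA -exprD; apply: hA; nlia.
have h3 : poch (p^-1 ^+ N) p k = poch Q^-1 p k * (1 - Q^-1 * P) / (1 - Q^-1).
  have := pochS Q^-1 p k; rewrite pochSl => e.
  have -> : p^-1 ^+ N = Q^-1 * p.
    by rewrite /Q exprSr invfM -mulrA mulVf // mulr1 exprVn.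
  rewrite -/P in e; rewrite -e [RHS]mulrC mulrA mulVf ?mul1r //.
have h4 : poch (a * Q) p k = (1 - a * Q) * poch (a * Q * p) p k / (1 - a * Q * P).
  have := pochS (a * Q) p k; rewrite pochSl => e.
  by rewrite -/P in e; rewrite e mulfK.
rewrite eQ1 eQ2 h3 -/Q h4 eP2 eQ3 !pochS !exprSr -/P.
have n1 : poch (a * Q * p) p k != 0.
  apply: poch_neq0 => i hi; rewrite /Q -!mulrA -exprS -exprD; apply: hA; nlia.
have n2 : poch (a * p / c) p k != 0 by apply: poch_neq0 => i hi; apply: hC; nlia.
have n3 : poch (a * p / b) p k != 0 by apply: poch_neq0 => i hi; apply: hB; nlia.
have n4 : poch p p k != 0 by apply: poch_neq0 => i hi; rewrite -exprS; apply: hP; nlia.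
have n5 : Q - 1 != 0 by rewrite -oppr_eq0 opprB; apply: hP; nlia.
have n6 : 1 - a != 0 by have := @hA 0; rewrite expr0 mulr1; apply; nlia.
have n7 : c - a * Q != 0.
  rewrite (sub_div _ hc); have -> : a * Q / c = a * p / c * p ^+ N by rewrite /Q exprS; field.
  apply: hC; nlia.
have n8 : b - a * Q != 0.
  rewrite (sub_div _ hb); have -> : a * Q / b = a * p / b * p ^+ N by rewrite /Q exprS; field.
  apply: hB; nlia.
have n9 : 1 - a * Q * p * P != 0.
  rewrite /Q /P -!mulrA -exprS -exprD; apply: hA; nlia.
have n10 : c - a * p * P != 0.
  rewrite (sub_div _ hc); have -> : a * p * P / c = a * p / c * p ^+ k by rewrite /P; field.
  apply: hC; nlia.
have n11 : b - a * p * P != 0.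
  rewrite (sub_div _ hb); have -> : a * p * P / b = a * p / b * p ^+ k by rewrite /P; field.
  apply: hB; nlia.
have n12 : 1 - p * P != 0 by rewrite /P -exprS; apply: hP; nlia.
field.
by rewrite hc hb Q0 ha n1 n2 n3 n4 n5 n6 n7 n8 n9 n10 n11 n12 aQP1 aQ1.
Qed.


Lemma R6S N : (N < L)%N -> R6 N.+1 = rho6 N * R6 N.
Proof.
move=> hN; rewrite /R6 /rho6 /= !pochS.
have n1 : poch (a * p / b) p N != 0 by apply: poch_neq0 => i hi; apply: hB; nlia.
have n2 : poch (a * p / c) p N != 0 by apply: poch_neq0 => i hi; apply: hC; nlia.
have n3 : 1 - a * p / b * p ^+ N != 0 by apply: hB; nlia.
have n4 : 1 - a * p / c * p ^+ N != 0 by apply: hC; nlia.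
rewrite exprS.
field.
have m1 : c - a * (p * p ^+ N) != 0 by apply: (subdiv_neq hc n4); field.
have m2 : b - a * (p * p ^+ N) != 0 by apply: (subdiv_neq hb n3); field.
by rewrite n1 n2 hc hb m1 m2.
Qed.


Lemma g6_0 N : g6 N 0 = 0.
Proof. by rewrite /g6 /= expr0 subrr !(mulr0, mul0r). Qed.

Lemma g6_L N : (N.+1 < L)%N -> g6 N L = 0.
Proof.
move=> hN; rewrite /g6 /E6 /=.
rewrite (@poch_eq0 _ (p ^- N.+1) p L N.+1) //; last by rewrite mulVf // expf_neq0.
by rewrite !(mulr0, mul0r).
Qed.

Lemma sum6 N : (N < L)%N -> \sum_(k < L) t6 N k = R6 N.
Proof.
elim: N => [|N IH] hN.
  case: L hN hA => // L' _ hA'.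
  rewrite big_ord_recl big1 ?addr0.
    rewrite /t6 /R6 !poch0 !expr0 !mulr1 !mul1r !divr1 invr1 divff //.
    by have := @hA' 0 isT; rewrite expr0 mulr1.
  move=> i _; rewrite /t6 expr0 (@poch_eq0 _ 1 p _ 0) //; last by rewrite expr0 mulr1.
  by rewrite !mulr0 !mul0r.
have hN' : (N < L)%N by nlia.
have e : forall k : 'I_L, t6 N.+1 k = rho6 N * t6 N k + (g6 N k.+1 - g6 N k).
  by move=> k; rewrite -step6 // addrC subrK.
rewrite (eq_bigr _ (fun k _ => e k)) big_split /= -mulr_sumr IH // R6S //.
have -> : \sum_(i < L) (g6 N i.+1 - g6 N i) = g6 N L - g6 N 0.
  by rewrite -(big_mkord xpredT (fun i => g6 N i.+1 - g6 N i)) telescope_sumr.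
by rewrite g6_L // g6_0 subrr addr0.
Qed.

End SixPhiFive.

Section Gen.
Variable K : fieldType.
Lemma gen_addf (a1 b1 a2 b2 : K) : b1 != 0 -> b2 != 0 ->
  a1 / b1 + a2 / b2 = (a1 * b2 + a2 * b1) / (b1 * b2).
Proof. by move=> h1 h2; field; rewrite h1 h2. Qed.
Lemma gen_mulf (a1 b1 a2 b2 : K) : b1 != 0 -> b2 != 0 ->
  a1 / b1 * (a2 / b2) = (a1 * a2) / (b1 * b2).
Proof. by move=> h1 h2; field; rewrite h1 h2. Qed.
Lemma gen_dM (P f g : K) e1 e2 : P ^+ e1 * f * (P ^+ e2 * g) = P ^+ (e1 + e2) * (f * g).
Proof. by rewrite exprD; ring. Qed.
Lemma gen_dMl (P g f : K) e : g * (P ^+ e * f) = P ^+ e * (g * f).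
Proof. by ring. Qed.
Lemma gen_dD (P f g : K) e : P ^+ e * f + P ^+ e * g = P ^+ e * (f + g).
Proof. by ring. Qed.
Lemma gen_dN (P f : K) e : - (P ^+ e * f) = P ^+ e * (- f).
Proof. by ring. Qed.
Lemma gen_prod (A B u v : K) : A * u - B * v = A * (u - v) + (A - B) * v.
Proof. by ring. Qed.
Lemma gen_inv (f g : K) : f != 0 -> g != 0 -> f^-1 - g^-1 = - ((f - g) * (f^-1 * g^-1)).
Proof. by move=> h1 h2; field; rewrite h1 h2. Qed.
End Gen.

Section Loc.
Variables (K : fieldType) (tf : {rmorphism {poly rat} -> K}).
Variable P : {poly rat}.

Definition inLoc (f : K) := exists A B : {poly rat},
  [/\ tf B != 0, coprimep B P & f = tf A / tf B].
Definition uLoc (f : K) := [/\ f != 0, inLoc f & inLoc f^-1].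
Definition dLoc (e : nat) (f : K) := exists g, inLoc g /\ f = (tf P) ^+ e * g.


Lemma inLoc_poly A : inLoc (tf A).
Proof. by exists A, 1; rewrite rmorph1 oner_neq0 coprime1p divr1. Qed.

Lemma inLoc1 : inLoc 1.
Proof. by have := inLoc_poly 1; rewrite rmorph1. Qed.

Lemma inLoc0 : inLoc 0.
Proof. by have := inLoc_poly 0; rewrite rmorph0. Qed.

Lemma inLocD f g : inLoc f -> inLoc g -> inLoc (f + g).
Proof.
move=> [A1 [B1 [h1 c1 ->]]] [A2 [B2 [h2 c2 ->]]].
exists (A1 * B2 + A2 * B1), (B1 * B2); split.
- by rewrite rmorphM mulf_neq0.
- by rewrite coprimepMl c1 c2.
have t1 := h1; have t2 := h2.
by rewrite rmorphD !rmorphM (@gen_addf K).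
Qed.

Lemma inLocM f g : inLoc f -> inLoc g -> inLoc (f * g).
Proof.
move=> [A1 [B1 [h1 c1 ->]]] [A2 [B2 [h2 c2 ->]]].
exists (A1 * A2), (B1 * B2); split.
- by rewrite rmorphM mulf_neq0.
- by rewrite coprimepMl c1 c2.
have t1 := h1; have t2 := h2.
by rewrite !rmorphM (@gen_mulf K).
Qed.

Lemma inLocN f : inLoc f -> inLoc (- f).
Proof.
move=> h; have -> : - f = tf (-1) * f by rewrite rmorphN rmorph1 mulN1r.
by apply: inLocM => //; apply: inLoc_poly.
Qed.

Lemma inLocB f g : inLoc f -> inLoc g -> inLoc (f - g).
Proof. by move=> hf hg; apply: inLocD => //; apply: inLocN. Qed.

Lemma inLocX f k : inLoc f -> inLoc (f ^+ k).
Proof.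
move=> h; elim: k => [|k IH]; first by rewrite expr0; apply: inLoc1.
by rewrite exprS; apply: inLocM.
Qed.

Lemma inLoc_prod (I : finType) (F : I -> K) :
  (forall i, inLoc (F i)) -> inLoc (\prod_i F i).
Proof.
move=> h; apply: (big_ind inLoc) => //; [exact: inLoc1 | exact: inLocM].
Qed.

Lemma inLoc_sum (I : finType) (F : I -> K) :
  (forall i, inLoc (F i)) -> inLoc (\sum_i F i).
Proof.
move=> h; apply: (big_ind inLoc) => //; [exact: inLoc0 | exact: inLocD].
Qed.

Lemma uLoc_poly A : tf A != 0 -> coprimep A P -> uLoc (tf A).
Proof.
move=> h c; split; first by [].
  exact: inLoc_poly.
by exists 1, A; rewrite h c rmorph1 div1r.
Qed.

Lemma uLoc_inLoc f : uLoc f -> inLoc f. Proof. by case. Qed.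
Lemma uLoc_inLocV f : uLoc f -> inLoc f^-1. Proof. by case. Qed.

Lemma uLocM f g : uLoc f -> uLoc g -> uLoc (f * g).
Proof.
move=> [f0 f1 f2] [g0 g1 g2]; split.
- by rewrite mulf_neq0.
- exact: inLocM.
by rewrite invfM; apply: inLocM.
Qed.

Lemma uLocV f : uLoc f -> uLoc f^-1.
Proof. by move=> [f0 f1 f2]; split; rewrite ?invr_eq0 ?invrK. Qed.

Lemma uLocN f : uLoc f -> uLoc (- f).
Proof.
move=> [f0 f1 f2]; split; rewrite ?oppr_eq0 //; first exact: inLocN.
by rewrite invrN; apply: inLocN.
Qed.

Lemma uLoc1 : uLoc 1.
Proof. by split; rewrite ?oner_neq0 ?invr1 //; apply: inLoc1. Qed.

Lemma uLocX f k : uLoc f -> uLoc (f ^+ k).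
Proof.
move=> h; elim: k => [|k IH]; first by rewrite expr0; apply: uLoc1.
by rewrite exprS; apply: uLocM.
Qed.

Lemma uLoc_prod (I : finType) (F : I -> K) :
  (forall i, uLoc (F i)) -> uLoc (\prod_i F i).
Proof.
move=> h; apply: (big_ind uLoc) => //; [exact: uLoc1 | exact: uLocM].
Qed.

Lemma inLoc_div f g : inLoc f -> uLoc g -> inLoc (f / g).
Proof. by move=> hf [_ _ hg]; apply: inLocM. Qed.

Lemma dLoc0 f : inLoc f -> dLoc 0 f.
Proof. by move=> h; exists f; rewrite expr0 mul1r. Qed.

Lemma dLoc_inLoc e f : dLoc e f -> inLoc f.
Proof.
move=> [g [hg ->]]; apply: inLocM => //; apply: inLocX; exact: inLoc_poly.
Qed.

Lemma dLocM e1 e2 f g : dLoc e1 f -> dLoc e2 g -> dLoc (e1 + e2) (f * g).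
Proof.
move=> [f' [hf ->]] [g' [hg ->]]; exists (f' * g'); split; first exact: inLocM.
by rewrite (@gen_dM K).
Qed.

Lemma dLocMl e f g : inLoc g -> dLoc e f -> dLoc e (g * f).
Proof.
move=> hg [f' [hf ->]]; exists (g * f'); split; first exact: inLocM.
by rewrite (@gen_dMl K).
Qed.

Lemma dLocMr e f g : inLoc g -> dLoc e f -> dLoc e (f * g).
Proof. by move=> hg hf; rewrite mulrC; apply: dLocMl. Qed.

Lemma dLocD e f g : dLoc e f -> dLoc e g -> dLoc e (f + g).
Proof.
move=> [f' [hf ->]] [g' [hg ->]]; exists (f' + g'); split; first exact: inLocD.
by rewrite (@gen_dD K).
Qed.

Lemma dLocN e f : dLoc e f -> dLoc e (- f).
Proof.
move=> [f' [hf ->]]; exists (- f'); split; first exact: inLocN.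
by rewrite (@gen_dN K).
Qed.

Lemma dLocB e f g : dLoc e f -> dLoc e g -> dLoc e (f - g).
Proof. by move=> hf hg; apply: dLocD => //; apply: dLocN. Qed.

Lemma dLoc_0 e : dLoc e 0.
Proof. by exists 0; rewrite mulr0; split => //; exact: inLoc0. Qed.

Lemma dLoc_sum e (I : finType) (F : I -> K) :
  (forall i, dLoc e (F i)) -> dLoc e (\sum_i F i).
Proof.
move=> h; apply: (big_ind (dLoc e)) => //; [exact: dLoc_0 | exact: dLocD].
Qed.

Lemma dLocX e f k : dLoc e f -> dLoc (e * k) (f ^+ k).
Proof.
move=> h; elim: k => [|k IH]; first by rewrite expr0 muln0; apply: dLoc0; apply: inLoc1.
by rewrite exprS mulnS; apply: dLocM.
Qed.

Lemma dLoc_prod_diff e k (u v : nat -> K) :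
  (forall i, (i < k)%N -> [/\ inLoc (u i), inLoc (v i) & dLoc e (u i - v i)]) ->
  dLoc e (\prod_(i < k) u i - \prod_(i < k) v i).
Proof.
elim: k => [|k IH] h; first by rewrite !big_ord0 subrr; apply: dLoc_0.
rewrite !big_ord_recr /=.
have [hu hv hd] := h k (ltnSn k).
have IH' : dLoc e (\prod_(i < k) u i - \prod_(i < k) v i).
  by apply: IH => i hi; apply: h; apply: ltnW.
have -> : \prod_(i < k) u i * u k - \prod_(i < k) v i * v k =
   \prod_(i < k) u i * (u k - v k) + (\prod_(i < k) u i - \prod_(i < k) v i) * v k.
  by rewrite (@gen_prod K).
apply: dLocD; first apply: dLocMl => //.
  by apply: inLoc_prod => i; have [] := h i (ltnW (ltn_ord i)).
exact: dLocMr.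
Qed.

Lemma dLocV e f g : uLoc f -> uLoc g -> dLoc e (f - g) -> dLoc e (f^-1 - g^-1).
Proof.
move=> [f0 f1 f2] [g0 g1 g2] h.
rewrite (@gen_inv K) //.
by apply: dLocN; apply: dLocMr => //; apply: inLocM.
Qed.

Lemma dLoc_congr f : dLoc 2 f -> exists A B : {poly rat},
  [/\ B != 0, coprimep B (P ^+ 2) & f - 0 = tf (P ^+ 2 * A) / tf B].
Proof.
move=> [g [[A [B [hB cB ->]]] ->]].
exists A, B; split.
- by apply: contraNneq hB => ->; rewrite rmorph0.
- exact: coprimep_expr.
- by rewrite subr0 rmorphM rmorphXn mulrA.
Qed.

End Loc.

Lemma PhiQ_dvd n : (0 < n)%N -> exists h, 'X^n - 1 = PhiQ n * h.
Proof.
move=> n0; have := prod_Cyclotomic n0.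
move/(congr1 (map_poly (intr : int -> rat))).
rewrite rmorph_prod rmorphB rmorph1 /= map_polyXn => <-.
rewrite (big_rem n) /=; last by rewrite -dvdn_divisors.
by exists (\prod_(d <- rem n (divisors n)) map_poly intr 'Phi_d).
Qed.

Lemma PhiQ_coprime n m : (0 < n)%N -> (0 < m)%N -> ~~ (n %| m)%N ->
  coprimep ('X^m - 1) (PhiQ n).
Proof.
move=> n0 m0 nm.
have [z pz] := C_prim_root_exists n0.
rewrite -(coprimep_map (ratr : {rmorphism rat -> algC})).
rewrite rmorphB rmorph1 /= map_polyXn /PhiQ -map_poly_comp.
have -> : map_poly (ratr \o intr) 'Phi_n = map_poly (intr : int -> algC) 'Phi_n.
  by apply: eq_map_poly => a /=; rewrite rmorph_int.
rewrite (Cintr_Cyclotomic pz).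
apply/Pdiv.ClosedField.coprimepP => y.
rewrite rootE !hornerE => /eqP hy.
apply/negP => /eqP hc.
have : root (cyclotomic z n) y by rewrite /root hc.
rewrite (root_cyclotomic pz) => py.
move: nm; rewrite (prim_order_dvd py).
by rewrite -subr_eq0 hy eqxx.
Qed.

Lemma PhiQ_coprimeX n : (0 < n)%N -> coprimep 'X (PhiQ n).
Proof.
move=> n0; rewrite coprimep_sym coprimepX.
apply/negP => /eqP h0.
have [h e] := PhiQ_dvd n0.
have := congr1 (horner^~ 0) e; rewrite /= hornerM h0 mul0r !hornerE.
rewrite expr0n eqn0Ngt n0 /= sub0r => /eqP; by rewrite oppr_eq0 oner_eq0.
Qed.


Section QPow.
Variables (K : fieldType) (tf : {rmorphism {poly rat} -> K}).
Hypothesis tf_eq0 : forall A, (tf A == 0) = (A == 0).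
Variable n : nat.
Hypothesis n1 : (1 < n)%N.
Local Notation P := (PhiQ n).
Local Notation x := (tf 'X).

Lemma n0 : (0 < n)%N. Proof. exact: ltnW. Qed.

Lemma x_neq0 : x != 0. Proof. by rewrite tf_eq0 polyX_eq0. Qed.

Lemma xzD (m k : int) : x ^ (m + k) = x ^ m * x ^ k.
Proof. exact: expfzDr x_neq0. Qed.

Lemma xXn_poly k : x ^+ k - 1 = tf ('X^k - 1).
Proof. by rewrite rmorphB rmorphXn rmorph1. Qed.

Lemma XnsubC_neq0 k : (0 < k)%N -> ('X^k - 1 : {poly rat}) != 0.
Proof. by move=> k0; rewrite -size_poly_eq0 -polyC1 size_XnsubC. Qed.

Lemma uLoc_xn k : uLoc tf P (x ^+ k).
Proof.
rewrite -rmorphXn; apply: uLoc_poly.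
  by rewrite tf_eq0 expf_neq0 // polyX_eq0.
by apply: coprimep_expl; apply: PhiQ_coprimeX; apply: n0.
Qed.

Lemma uLoc_xz m : uLoc tf P (x ^ m).
Proof.
case: m => k; first exact: uLoc_xn.
by rewrite NegzE -exprnN; apply: uLocV; apply: uLoc_xn.
Qed.

Lemma uLoc_1subxn k : (forall t : nat, k != (t * n)%N) -> uLoc tf P (1 - x ^+ k).
Proof.
move=> h.
have k0 : (0 < k)%N by case: k h => // h; have := h 0%N; rewrite mul0n eqxx.
have nk : ~~ (n %| k)%N.
  by apply/negP => /dvdnP [t e]; have := h t; rewrite e eqxx.
have -> : 1 - x ^+ k = - (x ^+ k - 1) by rewrite opprB.
apply: uLocN; rewrite xXn_poly; apply: uLoc_poly => //.
  rewrite tf_eq0; exact: XnsubC_neq0.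
exact: PhiQ_coprime n0 k0 nk.
Qed.

Lemma uLoc_1subx (m : int) : (forall t : int, m != t * n%:Z) -> uLoc tf P (1 - x ^ m).
Proof.
case: m => k h.
  apply: uLoc_1subxn => t; apply/negP => /eqP e.
  by have := h t%:Z; rewrite e PoszM eqxx.
rewrite NegzE -exprnN.
have hk : uLoc tf P (1 - x ^+ k.+1).
  apply: uLoc_1subxn => t; apply/negP => /eqP e.
  by have := h (- t%:Z); rewrite NegzE e PoszM mulNr eqxx.
have -> : 1 - (x ^+ k.+1)^-1 = - ((x ^+ k.+1)^-1 * (1 - x ^+ k.+1)).
  by field; rewrite expf_neq0 // x_neq0.
by apply: uLocN; apply: uLocM => //; apply: uLocV; apply: uLoc_xn.
Qed.

Lemma dLoc_xn1 : dLoc tf P 1 (x ^+ n - 1).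
Proof.
have [h e] := PhiQ_dvd n0.
by exists (tf h); split; [apply: inLoc_poly | rewrite xXn_poly e rmorphM expr1].
Qed.

Lemma dLoc_xnk1 j : dLoc tf P 1 (x ^+ (j * n) - 1).
Proof.
elim: j => [|j IH]; first by rewrite mul0n expr0 subrr; apply: dLoc_0.
have -> : x ^+ (j.+1 * n) - 1 = x ^+ (j * n) * (x ^+ n - 1) + (x ^+ (j * n) - 1).
  by rewrite mulSn exprD; ring.
apply: dLocD => //; apply: dLocMl => //; first exact: (uLoc_inLoc (uLoc_xn _)).
exact: dLoc_xn1.
Qed.

Lemma dLoc_1subx (m t : int) : m = t * n%:Z -> dLoc tf P 1 (1 - x ^ m).
Proof.
move=> ->; case: t => j.
  rewrite -PoszM; have -> : 1 - x ^+ (j * n) = - (x ^+ (j * n) - 1) by rewrite opprB.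
  by apply: dLocN; apply: dLoc_xnk1.
rewrite NegzE mulNr -PoszM -exprnN.
have -> : 1 - (x ^+ (j.+1 * n))^-1 = (x ^+ (j.+1 * n))^-1 * (x ^+ (j.+1 * n) - 1).
  by field; rewrite expf_neq0 // x_neq0.
apply: dLocMl; last exact: dLoc_xnk1.
by apply: uLoc_inLocV; apply: uLoc_xn.
Qed.

Lemma xz_neq1 (m : int) : m != 0 -> 1 - x ^ m != 0.
Proof.
have H k : (0 < k)%N -> 1 - x ^+ k != 0.
  move=> k0; rewrite -oppr_eq0 opprB xXn_poly tf_eq0; exact: XnsubC_neq0.
case: m => k hk; first by apply: H; case: k hk.
rewrite NegzE -exprnN subr_eq0 eq_sym invr_eq1 eq_sym -subr_eq0.
exact: H.
Qed.

End QPow.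

Lemma int_odd_4 (n j s : int) : 0 < j < n -> (exists v, n = 2 * v + 1) -> 4 * j != s * n.
Proof.
move=> h [v ev]; apply/eqP => e.
have s0 : 0 < s by nia.
have s4 : s < 4 by nia.
have : (s = 1) \/ (s = 2) \/ (s = 3) by lia.
case=> [hs|[hs|hs]]; rewrite hs ev in e; lia.
Qed.

Lemma int_nm4 (n j c : int) : 0 < j < n -> (exists v, n = 2 * v + 1) ->
  forall t : int, 4 * j + c * n != t * n.
Proof.
move=> h hv t; apply/eqP => e.
have := int_odd_4 (t - c) h hv; rewrite mulrBl -e.
by rewrite addrK eqxx.
Qed.

Lemma int_nm_small (n r : int) : - n < r < n -> r != 0 -> forall t : int, r != t * n.
Proof.
move=> h r0 t; apply/eqP => e; rewrite e in h r0.
have : (t <= -1) \/ (t = 0) \/ (1 <= t) by lia.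
case=> [ht|[ht|ht]]; [nia | by rewrite ht mul0r eqxx in r0 | nia].
Qed.

Section Main.
Variables (K : fieldType) (tf : {rmorphism {poly rat} -> K}).
Hypothesis tf_eq0 : forall A, (tf A == 0) = (A == 0).
Variables (r : int) (n : nat).
Hypotheses (n1 : (1 < n)%N).
Local Notation x := (tf 'X).
Local Notation P := (PhiQ n).

Lemma E1 k : x ^+ k = x ^ (k%:Z). Proof. by []. Qed.
Lemma E2 (m : int) k : (x ^ m) ^+ k = x ^ (m * k%:Z). Proof. by rewrite -[LHS]/((x ^ m) ^ (k%:Z)) exprz_exp. Qed.
Lemma E3 (m k : int) : x ^ m * x ^ k = x ^ (m + k).
Proof. by rewrite (xzD tf_eq0). Qed.
Lemma E4 (m : int) : (x ^ m)^-1 = x ^ (- m). Proof. exact: invr_expz. Qed.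
Lemma E5 : x = x ^ 1. Proof. by rewrite expr1z. Qed.

Ltac xnorm := rewrite ?(mulr1, divr1, E1, E2, invfM, E4, mulrA, E3).


Variables (m : int) (N M1 : nat) (u v : int).
Hypotheses (hm4 : n%:Z + r = 4 * m) (hN : N%:Z = n%:Z - m) (hM1 : M1%:Z = m - 1)
  (hu : r = 2 * u + 1) (hv : n%:Z = 2 * v + 1) (hN0 : (0 < N)%N) (hNn : (N < n)%N)
  (hMN : (M1 < N)%N) (hrn : - (n%:Z) < r < n%:Z).

Local Notation p := (x ^+ 4).
Local Notation a := (x ^ r).
Local Notation X0 := (x ^+ (3 * n)).

Lemma hvx : exists v0, n%:Z = 2 * v0 + 1. Proof. by exists v. Qed.

Lemma u_1subx (e : int) : (forall t : int, e != t * n%:Z) -> uLoc tf P (1 - x ^ e).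
Proof. exact: uLoc_1subx. Qed.

Lemma u_4j (j : nat) (c : int) : (0 < j < n)%N -> uLoc tf P (1 - x ^ (4 * j%:Z + c * n%:Z)).
Proof.
move=> hj; apply: u_1subx; apply: int_nm4; last exact: hvx.
move: hj; clear; lia.
Qed.

Lemma u_xz (e : int) : uLoc tf P (x ^ e). Proof. exact: uLoc_xz. Qed.
Lemma i_xz (e : int) : inLoc tf P (x ^ e). Proof. exact: uLoc_inLoc (u_xz e). Qed.
Lemma i_1subxz (e : int) : inLoc tf P (1 - x ^ e).
Proof. by apply: inLocB; [apply: inLoc1 | apply: i_xz]. Qed.

Lemma xz0 (e : int) : x ^ e != 0.
Proof. by have [] := u_xz e. Qed.

Lemma d_1subx (e t : int) : e = t * n%:Z -> dLoc tf P 1 (1 - x ^ e).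
Proof. exact: dLoc_1subx. Qed.

Lemma ne1 (e : int) : e != 0 -> 1 - x ^ e != 0.
Proof. exact: xz_neq1. Qed.


Lemma u_4j' (e : int) (j : nat) (c : int) : (0 < j < n)%N -> e = 4 * j%:Z + c * n%:Z ->
  uLoc tf P (1 - x ^ e).
Proof. by move=> hj ->; apply: u_4j. Qed.

Lemma X0_neq0 : X0 != 0. Proof. exact: (xz0 (3 * n)%:Z). Qed.

Lemma d2X0 : dLoc tf P 2 ((1 - X0) ^+ 2).
Proof.
have h : dLoc tf P 1 (1 - X0).
  have := @d_1subx (3 * n)%:Z 3; apply; lia.
exact: (dLocX 2 h).
Qed.

Lemma pair_num (y X q : K) : X != 0 ->
  (1 - y * 1 * q) * (1 - y / 1 * q) - (1 - y * X * q) * (1 - y / X * q) = y * q * (1 - X) ^+ 2 / X.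
Proof. by move=> hX; field; rewrite hX oner_neq0. Qed.

Lemma pair_den (y X q : K) : X != 0 ->
  (1 - y / 1 * q) * (1 - y * 1 * q) - (1 - y / X * q) * (1 - y * X * q) = y * q * (1 - X) ^+ 2 / X.
Proof. by move=> hX; field; rewrite hX oner_neq0. Qed.

Lemma d_pair (y q : K) : inLoc tf P (y * q) -> dLoc tf P 2 (y * q * (1 - X0) ^+ 2 / X0).
Proof.
move=> h; apply: dLocMr; first by apply: uLoc_inLocV; exact: (u_xz (3 * n)%:Z).
by apply: dLocMl => //; exact: d2X0.
Qed.

Lemma quot_diff (n1' d1 n2 d2 : K) :
  n1' / d1 - n2 / d2 = n1' * (d1^-1 - d2^-1) + (n1' - n2) * d2^-1.
Proof. by ring. Qed.

Definition Uf (X : K) k := poch (a * X) p k * poch (a / X) p k / (poch (p / X) p k * poch (p * X) p k).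

Lemma U_prod X k : Uf X k = \prod_(i < k)
  (((1 - a * X * p ^+ i) * (1 - a / X * p ^+ i)) / ((1 - p / X * p ^+ i) * (1 - p * X * p ^+ i))).
Proof. by rewrite prodf_div !big_split. Qed.

Lemma dU k : (k < n)%N -> dLoc tf P 2 (Uf 1 k - Uf X0 k).
Proof.
move=> hk; rewrite !U_prod.
apply: (dLoc_prod_diff
  (u := fun i => ((1 - a * 1 * p ^+ i) * (1 - a / 1 * p ^+ i)) / ((1 - p / 1 * p ^+ i) * (1 - p * 1 * p ^+ i)))
  (v := fun i => ((1 - a * X0 * p ^+ i) * (1 - a / X0 * p ^+ i)) / ((1 - p / X0 * p ^+ i) * (1 - p * X0 * p ^+ i)))) => i hi.
have hin : (0 < i.+1 < n)%N by apply/andP; split => //; apply: leq_ltn_trans hi hk.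
have nu1 : inLoc tf P ((1 - a * 1 * p ^+ i) * (1 - a / 1 * p ^+ i)).
  by xnorm; apply: inLocM; apply: i_1subxz.
have nuX : inLoc tf P ((1 - a * X0 * p ^+ i) * (1 - a / X0 * p ^+ i)).
  by xnorm; apply: inLocM; apply: i_1subxz.
have de1 : uLoc tf P ((1 - p / 1 * p ^+ i) * (1 - p * 1 * p ^+ i)).
  xnorm; apply: uLocM; apply: (u_4j' (j := i.+1) (c := 0)) => //; lia.
have deX : uLoc tf P ((1 - p / X0 * p ^+ i) * (1 - p * X0 * p ^+ i)).
  xnorm; apply: uLocM.
    by apply: (u_4j' (j := i.+1) (c := -3)) => //; lia.
  by apply: (u_4j' (j := i.+1) (c := 3)) => //; lia.
split.
- by apply: inLoc_div.
- by apply: inLoc_div.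
rewrite quot_diff; apply: dLocD.
  apply: dLocMl => //; apply: dLocV => //.
  rewrite pair_den; last exact: X0_neq0.
  by apply: d_pair; xnorm; apply: i_xz.
apply: dLocMr; first exact: uLoc_inLocV.
rewrite pair_num; last exact: X0_neq0.
by apply: d_pair; xnorm; apply: i_xz.
Qed.


Lemma u_pochp k : (k < n)%N -> uLoc tf P (poch p p k).
Proof.
move=> hk; apply: uLoc_prod => i; have hi := ltn_ord i; xnorm.
by apply: (u_4j' (j := i.+1) (c := 0)); [lia | lia].
Qed.

Lemma u_pochpX0 k : (k < n)%N -> uLoc tf P (poch (p / X0) p k).
Proof.
move=> hk; apply: uLoc_prod => i; have hi := ltn_ord i; xnorm.
by apply: (u_4j' (j := i.+1) (c := -3)); [lia | lia].
Qed.

Lemma u_pochpX0' k : (k < n)%N -> uLoc tf P (poch (p * X0) p k).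
Proof.
move=> hk; apply: uLoc_prod => i; have hi := ltn_ord i; xnorm.
by apply: (u_4j' (j := i.+1) (c := 3)); [lia | lia].
Qed.

Lemma r_nm : forall t : int, r != t * n%:Z.
Proof. apply: int_nm_small => //; lia. Qed.

Lemma u_1suba : uLoc tf P (1 - a).
Proof. exact: u_1subx r_nm. Qed.

Lemma u_1subx1 : uLoc tf P (1 - x).
Proof.
have := @u_1subx 1; rewrite expr1z; apply => t; apply/eqP => e.
have : (t <= 0) \/ (1 <= t) by lia.
case=> ht; nia.
Qed.

Lemma i_pocha k : inLoc tf P (poch a p k).
Proof. by apply: inLoc_prod => i; xnorm; apply: i_1subxz. Qed.

Definition Wf k := (1 - a * p ^+ (2 * k)) / (1 - a) * (poch a p k * poch a p k)
  / (poch p p k * poch p p k) * (p / (a * a)) ^+ k.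

Lemma i_Wf k : (k < n)%N -> inLoc tf P (Wf k).
Proof.
move=> hk; rewrite /Wf; apply: inLocM; last by apply: inLocX; xnorm; apply: i_xz.
apply: inLoc_div; last by apply: uLocM; apply: u_pochp.
apply: inLocM; last by apply: inLocM; apply: i_pocha.
apply: inLoc_div; last exact: u_1suba.
by xnorm; apply: i_1subxz.
Qed.

Lemma ne_u (f : K) : uLoc tf P f -> f != 0. Proof. by case. Qed.

Lemma termA k : (k < n)%N ->
  (1 - x ^ (8 * k%:Z + r)) / (1 - x) * (poch a p k) ^+ 4 / (poch p p k) ^+ 4
    * x ^ ((4 - 2 * r) * k%:Z) = (1 - a) / (1 - x) * (Wf k * Uf 1 k).
Proof.
move=> hk.
have e1 : x ^ (8 * k%:Z + r) = a * p ^+ (2 * k) by xnorm; congr (_ ^ _); lia.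
have e2 : x ^ ((4 - 2 * r) * k%:Z) = (p / (a * a)) ^+ k by xnorm; congr (_ ^ _); lia.
have n1a := ne_u u_1suba; have n1x := ne_u u_1subx1; have npp := ne_u (u_pochp hk).
have na : a != 0 by apply: xz0.
rewrite e1 e2 /Wf /Uf !mulr1 !divr1.
by field; rewrite ?n1a ?n1x ?npp ?na.
Qed.

Lemma e_pN : p^-1 ^+ N = a / X0.
Proof. by xnorm; congr (_ ^ _); lia. Qed.
Lemma e_apN : a * p ^+ N.+1 = p * X0.
Proof. by xnorm; congr (_ ^ _); lia. Qed.
Lemma e_apa : a * p / a = p.
Proof. by xnorm; congr (_ ^ _); lia. Qed.
Lemma e_apaX : a * p / (a * X0) = p / X0.
Proof. by xnorm; congr (_ ^ _); lia. Qed.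
Lemma e_arg : a * p ^+ N.+1 / (a * (a * X0)) = p / (a * a).
Proof. by xnorm; congr (_ ^ _); lia. Qed.
Lemma e_apaaX : a * p / (a * (a * X0)) = p / (a * X0).
Proof. by xnorm; congr (_ ^ _); lia. Qed.

Lemma t6_eq k : (k < n)%N -> t6 p a a (a * X0) N k = Wf k * Uf X0 k.
Proof.
move=> hk; rewrite /t6 e_arg e_apN e_pN e_apa e_apaX /Wf /Uf.
have n1a := ne_u u_1suba; have npp := ne_u (u_pochp hk).
have np1 := ne_u (u_pochpX0 hk); have np2 := ne_u (u_pochpX0' hk).
have na : a != 0 by apply: xz0.
by field; rewrite ?n1a ?npp ?np1 ?np2 ?na.
Qed.

Lemma poch_dLoc (y q : K) N' i : (i < N')%N ->
  (forall j, (j < N')%N -> inLoc tf P (1 - y * q ^+ j)) ->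
  dLoc tf P 1 (1 - y * q ^+ i) -> dLoc tf P 1 (poch y q N').
Proof.
move=> hi hj hd; rewrite /poch (bigD1 (Ordinal hi)) //=.
apply: dLocMr => //; apply: (big_ind (inLoc tf P)); [exact: inLoc1 | exact: inLocM |].
by move=> j _; apply: hj.
Qed.

Lemma dR6 : dLoc tf P 2 (R6 p a a (a * X0) N).
Proof.
rewrite /R6 e_apaaX e_apa e_apaX.
apply: dLocMr; first by apply: uLoc_inLocV; apply: uLocM; [apply: u_pochp | apply: u_pochpX0].
apply: (dLocM (e1 := 1) (e2 := 1)).
  apply: (poch_dLoc (y := a * p) (q := p) (N' := N) (i := N.-1)); first by lia.
    by move=> j _; xnorm; apply: i_1subxz.
  by xnorm; apply: (@d_1subx _ 3); lia.
apply: (poch_dLoc (y := p / (a * X0)) (q := p) (N' := N) (i := M1)) => //.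
  by move=> j _; xnorm; apply: i_1subxz.
by xnorm; apply: (@d_1subx _ (-2)); lia.
Qed.

Lemma hP6 j : (0 < j <= n)%N -> 1 - p ^+ j != 0.
Proof. by move=> hj; xnorm; apply: ne1; lia. Qed.
Lemma hB6 j : (j <= n)%N -> 1 - a * p / a * p ^+ j != 0.
Proof. by move=> hj; xnorm; apply: ne1; lia. Qed.
Lemma hC6 j : (j <= n)%N -> 1 - a * p / (a * X0) * p ^+ j != 0.
Proof. by move=> hj; xnorm; apply: ne1; lia. Qed.
Lemma hA6 j : (j <= n + n)%N -> 1 - a * p ^+ j != 0.
Proof. by move=> hj; xnorm; apply: ne1; lia. Qed.

Lemma main_dLoc : dLoc tf P 2 (\sum_(k < n)
  (1 - x ^ (8 * k%:Z + r)) / (1 - x) * (poch a p k) ^+ 4 / (poch p p k) ^+ 4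
    * x ^ ((4 - 2 * r) * k%:Z)).
Proof.
rewrite (eq_bigr _ (fun k _ => termA (ltn_ord k))) -mulr_sumr.
apply: dLocMl; first by apply: inLoc_div; [apply: i_1subxz | apply: u_1subx1].
have eS : \sum_(k < n) Wf k * Uf 1 k =
    \sum_(k < n) Wf k * (Uf 1 k - Uf X0 k) + \sum_(k < n) t6 p a a (a * X0) N k.
  rewrite -big_split /=; apply: eq_bigr => k _; rewrite t6_eq //; ring.
have nx : x != 0 by rewrite tf_eq0 polyX_eq0.
have np : p != 0 by rewrite expf_neq0.
have na : a != 0 by apply: xz0.
have nc : a * X0 != 0 by rewrite mulf_neq0 // X0_neq0.
rewrite eS (sum6 np na na nc hP6 hB6 hC6 hA6 hNn).
apply: dLocD; last exact: dR6.
apply: dLoc_sum => k; apply: dLocMl; first exact: i_Wf.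
exact: dU.
Qed.

End Main.

Lemma int_setup (r : int) (n : nat) :
  ~~ (2 %| r)%Z -> (1 < n)%N -> odd n -> (n%:Z = - r %[mod 4])%Z ->
  r <= n%:Z -> 4 - r <= n%:Z ->
  exists (m : int) (N M1 : nat) (u v : int),
   [/\ n%:Z + r = 4 * m, N%:Z = n%:Z - m, M1%:Z = m - 1 &
       r = 2 * u + 1] /\ (n%:Z = 2 * v + 1 /\
       [/\ (0 < N)%N, (N < n)%N, (M1 < N)%N & - (n%:Z) < r < n%:Z]).
Proof.
move=> hr n1 no hmod h1 h2.
have [m hm4] : exists m : int, n%:Z + r = 4 * m by exists ((n%:Z + r) %/ 4)%Z; lia.
have [u hu] : exists u : int, r = 2 * u + 1 by exists ((r - 1) %/ 2)%Z; lia.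
have [v hv] : exists v : int, n%:Z = 2 * v + 1 by exists ((n%:Z - 1) %/ 2)%Z; lia.
exists m, `|n%:Z - m|%N, `|m - 1|%N, u, v.
split; [split; lia | split; [lia | split; lia]].
Qed.


End Aux.
Import Aux.

Theorem theorem5 (r : int) (n : nat) :
  ~~ (2 %| r)%Z ->
  (1 < n)%N -> odd n ->
  (n%:Z = - r %[mod 4])%Z ->
  r <= n%:Z -> 4 - r <= n%:Z ->
  congr_ratfun
    (\sum_(k < n)
       qint (8 * k%:Z + r)
       * (qpoch (qq ^ r) (qq ^+ 4) k) ^+ 4 / (qpoch (qq ^+ 4) (qq ^+ 4) k) ^+ 4
       * qq ^ ((4 - 2 * r) * k%:Z))
    0 (PhiQ n ^+ 2).
Proof.
move=> hr n1 no hmod h1 h2.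
have [m [N [M1 [u [v [[hm4 hN hM1 hu] [hv [hN0 hNn hMN hrn]]]]]]]] := @int_setup r n hr n1 no hmod h1 h2.
have H := main_dLoc (@tofrac_eq0 _) n1 hm4 hN hM1 hu hv hN0 hNn hMN hrn.
have := dLoc_congr H.
rewrite /congr_ratfun /qint /qpoch /qq.
exact.
Qed.
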